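(* Assume the standing setup below. For every integer $i$ with $0\le i\le s-2r+1$ and every $I\in\mathbb{P}_i(X)$, the linear form \[ \sum_{H\in \mathbb{P}_{i+2r}(X),\ I\subseteq H} L_H \] lies in the $\mathbb{F}_p$-linear span of $\{L_H : H\subseteq X,\ i\le |H|\le i+2r-1\}$.
   Context: Standing setup: $p$ is a prime; $K=\{k_1,\ldots,k_r\}$ and $L=\{l_1,\ldots,l_s\}$ are disjoint subsets of $\{0,1,\ldots,p-1\}$; $\mathcal{A}=\{A_1,\ldots,A_m\}$ is a family of distinct subsets of $[n]$ with $|A_i|\pmod p\in K$ for all $i$ and $|A_i\cap A_j|\pmod p\in L$ for all $i\ne j$. Let $X=[n-1]$. Associate a variable $x_i$ to each $A_i$, and for each $I\subseteq X$ define the linear form over $\mathbb{F}_p$: $L_I=\sum_{i:\ I\subseteq A_i} x_i$. For $j\ge0$, $\mathbb{P}_j(X)$ is the set of $j$-element subsets of $X$. *)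

(* Defs.v *)
From HB Require Import structures.
From mathcomp Require Import all_boot all_order all_algebra.
Set Implicit Arguments. Unset Strict Implicit. Unset Printing Implicit Defensive.
Import GRing.Theory.
Local Open Scope ring_scope.

(* Ground set [n] is encoded as 'I_n (element j+1 of [n] is ordinal j).
   X = [n-1] = first n-1 elements = ordinals j with j < n-1. *)
Definition Xset (n : nat) : {set 'I_n} := [set x : 'I_n | (val x < n.-1)%N].

(* The linear form L_I over F_p in variables x_1..x_m, as a row vector of
   coefficients: coefficient of x_i is 1 iff I \subset A_i. *)
Definition linform (p n m : nat) (A : 'I_m -> {set 'I_n}) (I : {set 'I_n})
  : 'rV['F_p]_m := \row_(i < m) (if I \subset A i then 1 else 0).

(* Main.v *)
Require Import Defs.
From HB Require Import structures.
From mathcomp Require Import all_boot all_order all_algebra.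
From mathcomp Require Import ring zify.
Import GRing.Theory.
Local Open Scope ring_scope.

Section BC.
Variable F : fieldType.

Definition bstep (c : F) (g : nat -> F) : nat -> F :=
  fun u => u%:R * g u.-1 + (u%:R - c) * g u.

Definition bc (cs : seq F) : nat -> F := foldr bstep (fun u => (u == 0)%:R) cs.

Lemma bc_big cs u : (size cs < u)%N -> bc cs u = 0.
Proof.
elim: cs u => [|c cs IH] u hu; first by case: u hu.
rewrite /= /bstep (IH u) ?mulr0 ?addr0; last by apply: ltn_trans hu.
by rewrite IH ?mulr0 //; case: u hu.
Qed.

Lemma bc_top cs : bc cs (size cs) = (size cs)`!%:R.
Proof.
elim: cs => [|c cs IH] //=.
by rewrite /bstep /= IH bc_big // mulr0 addr0 factS natrM.
Qed.

Lemma binS_id (y u : nat) :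
  (u.+1 * 'C(y, u.+1) + u * 'C(y, u) = y * 'C(y, u))%N.
Proof.
rewrite mul_bin_left -mulnDl.
case: (leqP u y) => h; first by rewrite subnK.
by rewrite bin_small // !muln0.
Qed.

Lemma bc_eval cs y N : (size cs < N)%N ->
  \sum_(u < N) bc cs u * 'C(y, u)%:R = \prod_(c <- cs) (y%:R - c).
Proof.
elim: cs N => [|c cs IH] N hN.
  rewrite big_nil; case: N hN => // N _.
  rewrite big_ord_recl /= bin0 mulr1 big1 ?addr0 // => i _.
  by rewrite mul0r.
case: N hN => // N /= hN.
rewrite big_cons -(IH N) // mulr_sumr /bstep.
rewrite [LHS](eq_bigr (fun u : 'I_N.+1 => (u%:R * bc cs u.-1 * 'C(y,u)%:R)
     + ((u%:R - c) * bc cs u * 'C(y,u)%:R))); last by move=> u _; rewrite mulrDl.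
rewrite big_split /= big_ord_recl /= mul0r mul0r add0r big_ord_recr /=.
rewrite (bc_big cs N) // mulr0 mul0r addr0 -big_split /=.
apply: eq_bigr => u _.
rewrite /bump /= add1n.
have := congr1 (fun x : nat => x%:R : F) (binS_id y u).
rewrite !natrD !natrM => e.
rewrite add0n.
set g := bc cs u. set a : F := 'C(y,u)%:R. set b : F := 'C(y,u.+1)%:R.
have -> : (y%:R - c) * (g * a) = g * (y%:R * a) - c * g * a by ring.
have -> : (u.+1%:R : F) = u%:R + 1 by rewrite -addn1 natrD.
rewrite -e -/a -/b. ring.
Qed.
End BC.
Arguments bc {F}.
Arguments bc_big {F}.
Arguments bc_top {F}.
Arguments bc_eval {F}.

Lemma count_card (n : nat) (X I B : {set 'I_n}) (i t : nat) :
  I \subset X -> #|I| = i ->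
  #|[set H : {set 'I_n} | [&& H \subset X, #|H| == (i + t)%N & I \subset H] && (H \subset B)]|
  = if I \subset B then 'C(#|B :&: X| - i, t) else 0%N.
Proof.
move=> hIX hI.
case: ifP => hIB; last first.
  apply/eqP; rewrite cards_eq0; apply/eqP/setP => H; rewrite !inE.
  apply/negbTE; apply/negP => /andP[/and3P[_ _ h1] h2].
  by move: hIB; rewrite (subset_trans h1 h2).
have hIBX : I \subset B :&: X by rewrite subsetI hIB.
have -> : (#|B :&: X| - i = #|(B :&: X) :\: I|)%N.
  by rewrite cardsD (setIidPr hIBX) hI.
rewrite -(cards_draws ((B :&: X) :\: I) t) /=.
set S := [set D : {set 'I_n} | D \subset (B :&: X) :\: I & #|D| == t].
have inj : {in S &, injective (fun D => D :|: I)}.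
  move=> D1 D2; rewrite !inE => /andP[h1 _] /andP[h2 _] e.
  apply/setP => x; move/setP: e => /(_ x); rewrite !inE.
  case xI: (x \in I) => /=; last by rewrite !orbF.
  have n1 : x \notin D1 by apply/negP => /(subsetP h1); rewrite !inE xI.
  have n2 : x \notin D2 by apply/negP => /(subsetP h2); rewrite !inE xI.
  by rewrite (negbTE n1) (negbTE n2).
rewrite -(card_in_imset inj); apply: eq_card => H; rewrite !inE; apply/andP/imsetP.
  case=> /and3P[hX /eqP hH hIH] hB; exists (H :\: I).
    rewrite inE; apply/andP; split.
      by apply: setSD; rewrite subsetI hB hX.
    by rewrite cardsD (setIidPr hIH) hH hI addKn.
  apply/setP => x; rewrite !inE; case xI: (x \in I); rewrite /= ?orbT ?orbF ?andbT //.
  by rewrite (subsetP hIH).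
case=> D; rewrite inE => /andP[hD /eqP hDt] ->.
have dj : [disjoint D & I].
  by rewrite -setI_eq0; apply/eqP/setP=> x; rewrite !inE; apply/negbTE/negP => /andP[/(subsetP hD)]; rewrite !inE => /andP[/negP].
have hDX : D \subset B :&: X by apply: subset_trans hD (subsetDl _ _).
rewrite subsetI in hDX; case/andP: hDX => hDB hDX.
rewrite !subUset hDX hIX hDB hIB subsetUr /= andbT.
by rewrite cardsU (disjoint_setI0 dj) cards0 subn0 hDt hI addnC.
Qed.
Lemma sum_ind (T : finType) (F : fieldType) (P Q : pred T) :
  \sum_(x | P x) (if Q x then 1 else 0 : F) = #|[set x | P x && Q x]|%:R.
Proof.
rewrite -big_mkcondr /= -sumr_const; apply: eq_bigl => x; by rewrite inE.
Qed.

Lemma compX_le1 n : (#|~: Xset n| <= 1)%N.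
Proof.
apply/card_le1_eqP => x y; rewrite !inE -!leqNgt => hx hy.
apply/val_inj; have := ltn_ord x; have := ltn_ord y; move: hx hy.
case: n x y => [|n] x y /=; first by case: x.
move=> hx hy h1 h2; lia.
Qed.

Lemma cardD_le1 n (B : {set 'I_n}) : (#|B :\: Xset n| <= 1)%N.
Proof.
apply: leq_trans (compX_le1 n); apply: subset_leq_card.
by rewrite setDE subsetIr.
Qed.

Lemma cardI_le1 (T : finType) (Y S U : {set T}) : (#|Y| <= 1)%N ->
  S \subset Y -> U \subset Y -> #|S :&: U| = (#|S| * #|U|)%N.
Proof.
move=> hY hS hU.
have key : forall Z : {set T}, Z \subset Y -> Z = set0 \/ Z = Y.
  move=> Z hZ; case: (set_0Vmem Z) => [->|[x xZ]]; [by left|right].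
  apply/eqP; rewrite eqEcard hZ; apply: leq_trans hY _.
  by rewrite card_gt0; apply/set0Pn; exists x.
case: (key S hS) => ->; first by rewrite set0I !cards0.
case: (key U hU) => ->; first by rewrite setI0 !cards0 muln0.
rewrite setIid; move: hY; rewrite leq_eqVlt ltnS leqn0.
by case/orP => /eqP ->.
Qed.

Lemma fact_ndvd p k : prime p -> (k < p)%N -> ~~ (p %| k`!)%N.
Proof.
move=> hp; elim: k => [|k IH] hk; first by rewrite fact0 dvdn1; apply/eqP => e; move: (prime_gt1 hp); rewrite e.
rewrite factS Euclid_dvdM // negb_or IH ?andbT; last by apply: ltnW.
by apply/negP => /(dvdn_leq (ltn0Sn k)); rewrite leqNgt hk.
Qed.

Lemma Fp_fact_neq0 p k : prime p -> (k < p)%N -> (k`!%:R : 'F_p) != 0.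
Proof.
move=> hp hk; rewrite -(dvdn_pcharf (pchar_Fp hp)); exact: fact_ndvd.
Qed.
Theorem mainTheorem4 (p n m : nat) (hp : prime p) (K L : {set 'I_p})
  (A : 'I_m -> {set 'I_n})
  (hKL : [disjoint K & L])
  (hA_inj : injective A)
  (hK : forall i, [exists k in K, val k == (#|A i| %% p)%N])
  (hL : forall i j, i != j -> [exists l in L, val l == (#|A i :&: A j| %% p)%N])
  (i : nat) (hi : (i + 2 * #|K| <= #|L| + 1)%N)
  (I : {set 'I_n}) (hI : I \subset Xset n) (hIc : #|I| = i) :
  (\sum_(H : {set 'I_n} | [&& H \subset Xset n, #|H| == (i + 2 * #|K|)%N
                            & I \subset H]) linform p A H)
  \in <<[seq linform p A H | H <- enum [set H : {set 'I_n} |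
          [&& H \subset Xset n, (i <= #|H|)%N & (#|H| < i + 2 * #|K|)%N]]]>>%VS.
Proof.
set V := <<_>>%VS.
have memG : forall H : {set 'I_n}, H \subset Xset n -> (i <= #|H|)%N -> (#|H| < i + 2 * #|K|)%N ->
    linform p A H \in V.
  move=> H h1 h2 h3; apply: memv_span; apply/mapP; exists H => //.
  by rewrite mem_enum inE h1 h2 h3.
pose W t := \sum_(H : {set 'I_n} | [&& H \subset Xset n, #|H| == (i + t)%N & I \subset H])
   linform p A H.
have Wj : forall t j, W t 0 j = if I \subset A j then 'C(#|A j :&: Xset n| - i, t)%:R else 0.
  move=> t j; rewrite /W summxE; under eq_bigr do rewrite /linform mxE.
  rewrite sum_ind count_card //; by case: ifP.
have WV : forall t, (t < 2 * #|K|)%N -> W t \in V.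
  move=> t ht; apply: rpred_sum => H /and3P[h1 /eqP h2 h3]; apply: memG => //.
    by rewrite h2 leq_addr.
  by rewrite h2 ltn_add2l.
change (W (2 * #|K|)%N \in V).
have [lt|ge] := ltnP (2 * #|K|) p.
  pose cs := foldr (fun (k : 'I_p) s => ((val k)%:R - i%:R : 'F_p) :: ((val k)%:R - 1 - i%:R) :: s) [::] (enum K).
  have scs : size cs = (2 * #|K|)%N.
    rewrite /cs cardE; elim: (enum K) => //= k l ->; lia.
  have mcs : forall k, k \in K -> ((val k)%:R - i%:R \in cs) && ((val k)%:R - 1 - i%:R \in cs).
    move=> k; rewrite -mem_enum /cs; elim: (enum K) => //= k' l IH.
    rewrite !inE => /orP[/eqP->|/IH/andP[h1 h2]]; first by rewrite !eqxx !orbT.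
    by rewrite h1 h2 !orbT.
  have key : forall y : nat, \prod_(c <- cs) (y%:R - c) = 0 ->
      (2 * #|K|)`!%:R * 'C(y, 2 * #|K|)%:R = - \sum_(u < 2 * #|K|) bc cs u * 'C(y,u)%:R :> 'F_p.
    move=> y h; have := bc_eval cs y _ (ltnSn (size cs)).
    rewrite h big_ord_recr /= bc_top scs => e.
    by apply/eqP; rewrite -subr_eq0 opprK addrC e.
  have root : forall j, I \subset A j ->
      \prod_(c <- cs) ((#|A j :&: Xset n| - i)%N%:R - c) = 0.
    move=> j hIA.
    have hi' : (i <= #|A j :&: Xset n|)%N by rewrite -hIc subset_leq_card // subsetI hIA hI.
    case/existsP: (hK j) => k /andP[kK /eqP hk].
    have e1 : (#|A j|%:R : 'F_p) = (val k)%:R by rewrite hk Fp_nat_mod.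
    have e2 := cardsID (Xset n) (A j). have e3 := cardD_le1 _ (A j).
    apply/eqP; rewrite prodf_seq_eq0; apply/hasP.
    case/andP: (mcs k kK) => c1 c2.
    move: e3; rewrite leq_eqVlt ltnS leqn0 => /orP[/eqP d|/eqP d]; rewrite d in e2.
      exists ((val k)%:R - 1 - i%:R) => //=.
      by apply/eqP; rewrite natrB // -e1 -e2 natrD; ring.
    exists ((val k)%:R - i%:R) => //=.
    by apply/eqP; rewrite natrB // -e1 -e2 natrD; ring.
  have hf := Fp_fact_neq0 _ _ hp lt.
  have -> : W (2 * #|K|)%N = ((2 * #|K|)`!%:R)^-1 *: - \sum_(u < 2 * #|K|) bc cs u *: W u.
    apply/rowP => j; rewrite Wj mxE mxE summxE.
    under eq_bigr do rewrite mxE Wj.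
    case: ifP => hIA.
      by rewrite -key ?root // mulrA mulVf // mul1r.
    by rewrite big1 ?oppr0 ?mulr0 // => u _; rewrite mulr0.
  apply: rpredZ; rewrite rpredN; apply: rpred_sum => u _; apply: rpredZ; exact: WV.
have cKL : (#|K| + #|L| <= p)%N.
  have := max_card (mem (K :|: L)); rewrite card_ord cardsU (disjoint_setI0 hKL) cards0 subn0.
  by [].
have p1 := prime_gt1 hp.
have r1 : #|K| = 1%N by lia.
have s1 : #|L| = 1%N by lia.
have i0 : i = 0%N by lia.
rewrite i0 in memG hIc.
have /cards1P[k0 hK0] : #|K| == 1%N by rewrite r1.
have /cards1P[l0 hL0] : #|L| == 1%N by rewrite s1.
have hk0 : forall j, (#|A j|%:R : 'F_p) = (val k0)%:R.
  move=> j; case/existsP: (hK j) => k /andP[]; rewrite hK0 inE => /eqP -> /eqP ->.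
  by rewrite Fp_nat_mod.
have hl0 : forall j l, j != l -> (#|A j :&: A l|%:R : 'F_p) = (val l0)%:R.
  move=> j l hjl; case/existsP: (hL j l hjl) => k /andP[]; rewrite hL0 inE => /eqP -> /eqP ->.
  by rewrite Fp_nat_mod.
pose d : 'F_p := (val k0)%:R - (val l0)%:R.
have hd : d != 0.
  rewrite /d subr_eq0; apply/negP => /eqP e.
  have := congr1 (fun x : 'F_p => (x : nat)) e; rewrite /= !val_Fp_nat // !modn_small //.
  move/val_inj => ekl.
  move: hKL; rewrite -setI_eq0 => /eqP/setP/(_ k0); rewrite !inE hK0 hL0 !inE ekl eqxx.
  by [].
pose one := linform p A set0.
have oneV : one \in V by apply: memG; rewrite ?sub0set ?cards0 ?r1.
have one1 : forall j, one 0 j = 1 by move=> j; rewrite /one mxE sub0set.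
pose w : 'rV['F_p]_m := \row_j (#|A j :\: Xset n|%:R).
have ww : forall l, w 0 l * w 0 l = w 0 l.
  move=> l; rewrite /w mxE; have := cardD_le1 _ (A l).
  by rewrite leq_eqVlt ltnS leqn0 => /orP[] /eqP ->; rewrite ?mul1r ?mul0r.
pose g l := \sum_(x in A l :&: Xset n) linform p A [set x].
have gV : forall l, g l \in V.
  move=> l; apply: rpred_sum => x; rewrite inE => /andP[_ xX]; apply: memG.
  - by rewrite sub1set.
  - by [].
  - by rewrite cards1 r1.
have gj : forall l j, g l 0 j = #|A j :&: A l|%:R - w 0 j * w 0 l.
  move=> l j; rewrite /g summxE; under eq_bigr do rewrite mxE sub1set.
  rewrite sum_ind /w !mxE -(cardsID (Xset n) (A j :&: A l)) natrD.
  have -> : (A j :&: A l) :\: Xset n = (A j :\: Xset n) :&: (A l :\: Xset n).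
    by apply/setP => x; rewrite !inE; case: (x \in A j); case: (x \in A l); case: (\val x < n.-1)%N.
  rewrite (@cardI_le1 _ (~: Xset n) (A j :\: Xset n) (A l :\: Xset n)); last first.
  - by rewrite setDE subsetIr.
  - by rewrite setDE subsetIr.
  - exact: compX_le1.
  rewrite natrM addrK; congr (_%:R); apply: eq_card => x; rewrite !inE.
  by case: (x \in A j); case: (x \in A l); case: (\val x < n.-1)%N.
pose u l := d *: delta_mx 0 l - w 0 l *: w.
have uV : forall l, u l \in V.
  move=> l; have -> : u l = g l - (val l0)%:R *: one.
    apply/rowP => j; rewrite mxE [RHS]mxE gj !mxE sub0set eqxx /=.
    case: (eqVneq j l) => [->|hjl].
      by rewrite setIid hk0 /d (_ : true%:R = 1) // mulr1; ring.
    by rewrite hl0 // (_ : false%:R = 0) // mulr0; ring.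
  by apply: rpredB; [exact: gV | apply: rpredZ].
have sumE : \sum_l delta_mx 0 l = one.
  rewrite [RHS](row_sum_delta one); apply: eq_bigr => l _; by rewrite one1 scale1r.
pose S := \sum_l w 0 l.
have SwV : S *: w \in V.
  have e : \sum_l u l = d *: one - S *: w.
    by rewrite /u sumrB -scaler_sumr sumE -scaler_suml.
  have : d *: one - \sum_l u l \in V.
    by apply: rpredB; [apply: rpredZ | apply: rpred_sum].
  by rewrite e opprB addrC addrNK.
have dwV : d *: w \in V.
  have e : \sum_l w 0 l *: u l = d *: w - S *: w.
    have pt : forall l, w 0 l *: u l = d *: (w 0 l *: delta_mx 0 l) - w 0 l *: w.
      by move=> l; rewrite /u scalerBr !scalerA ww (mulrC (w 0 l)).
    under eq_bigr do rewrite pt.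
    by rewrite sumrB -scaler_sumr -row_sum_delta -scaler_suml.
  have : \sum_l w 0 l *: u l \in V by apply: rpred_sum => l _; apply: rpredZ.
  by rewrite e (rpredBr _ SwV).
have wV : w \in V.
  by have := rpredZ d^-1 dwV; rewrite scalerA mulVf // scale1r.
have eV : forall l, delta_mx 0 l \in V.
  move=> l; have := rpredZ d^-1 (rpredD (uV l) (rpredZ (w 0 l) wV)).
  by rewrite /u subrK scalerA mulVf // scale1r.
rewrite (row_sum_delta (W _)); apply: rpred_sum => l _; apply: rpredZ; exact: eV.
Qed.
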